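(* The incentive ratio for Leontief exchange economies equals $+\infty$, and the incentive ratio for Cobb--Douglas exchange economies equals $+\infty$. That is, for each of these two classes of utility functions $U$ and for every real $N>0$ there exist an exchange economy with utilities in $U$, an agent $i$ and a misreport $u_i'\in U$ such that $$\frac{\max_{x'\in\mathcal{E}(u_i')} u_i(x_i')}{\min_{x\in\mathcal{E}(u_i)} u_i(x_i)}\ \ge\ N .$$
   Context: An exchange economy with $n$ agents and $m$ commodities is a tuple $((u_i)_{i=1}^n,(e_i)_{i=1}^n)$, where $u_i:\mathbb{R}_+^m\to\mathbb{R}$ is agent $i$'s utility function and $e_i\in\mathbb{R}_+^m$ is agent $i$'s endowment ($e_{ij}$ is the amount of commodity $j$ owned by agent $i$). Given prices $p\in\mathbb{R}^m$, agent $i$'s demand is the set of solutions of: maximize $u_i(x_i)$ subject to $p\cdot x_i\le p\cdot e_i$, $x_i\ge 0$. A competitive (Walrasian) equilibrium is a pair $(p,x)$ with $p\in\mathbb{R}_+^m$, $x=(x_1,\dots,x_n)\in(\mathbb{R}_+^m)^n$, such that markets clear ($\sum_i x_{ij}=\sum_i e_{ij}$ for all $j$) and each $x_i$ is in agent $i$'s demand at $p$. For fixed $u_{-i}$ and $e$, if agent $i$ reports utility $\tilde u_i$ (others report truthfully), $\mathcal{E}(\tilde u_i)$ denotes the set of allocations $x$ for which some $p\in\mathbb{R}_+^m$ makes $(p,x)$ a competitive equilibrium of the economy with utilities $(\tilde u_i,u_{-i})$ and endowments $e$. For a class $U$ of utility functions, the incentive ratio of the market is $$\zeta=\max_{i}\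 \max_{u_{-i}\in U^{n-1},\,e}\ \max_{u_i'\in U}\frac{\max_{x'\in\mathcal{E}(u_i')}u_i(x_i')}{\min_{x\in\mathcal{E}(u_i)}u_i(x_i)},$$ where the allocation obtained under a misreport is evaluated with the true utility $u_i\in U$. Leontief utilities: $u(x)=\min_{j\in[m]}\{x_j/\alpha_j\}$ with $\alpha\in\mathbb{R}_{++}^m$. Cobb--Douglas utilities: $u(x)=\prod_{j=1}^m x_j^{\alpha_j}$ with $0\le\alpha_j\le 1$ and $\sum_j\alpha_j=1$. *)

(* Defs.v *)
From HB Require Import structures.
From mathcomp Require Import all_boot all_order all_algebra.
From mathcomp Require Import reals exp.
Set Implicit Arguments. Unset Strict Implicit. Unset Printing Implicit Defensive.
Import Order.TTheory GRing.Theory Num.Theory.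
Local Open Scope ring_scope.

Section Economy.
Variable R : realType.

Definition bundle (m : nat) := 'I_m -> R.

Definition dot {m} (p x : bundle m) : R := \sum_(j < m) p j * x j.

Definition nonneg {m} (x : bundle m) : Prop := forall j, 0 <= x j.

Definition in_demand {m} (u : bundle m -> R) (p e x : bundle m) : Prop :=
  [/\ nonneg x, dot p x <= dot p e &
      forall y : bundle m, nonneg y -> dot p y <= dot p e -> u y <= u x].

Definition competitive_eq {n m} (u : 'I_n -> bundle m -> R) (e : 'I_n -> bundle m)
  (p : bundle m) (x : 'I_n -> bundle m) : Prop :=
  [/\ nonneg p,
      (forall j, \sum_(i < n) x i j = \sum_(i < n) e i j) &
      forall i, in_demand (u i) p (e i) (x i)].

Definition eq_alloc {n m} (u : 'I_n -> bundle m -> R) (e : 'I_n -> bundle m)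
  (x : 'I_n -> bundle m) : Prop := exists p, competitive_eq u e p x.

Definition misreport {n m} (u : 'I_n -> bundle m -> R) (i : 'I_n)
  (u' : bundle m -> R) : 'I_n -> bundle m -> R :=
  fun k => if k == i then u' else u k.

Definition leontief {m} (alpha : bundle m.+1) (x : bundle m.+1) : R :=
  \big[Num.min/(x ord0 / alpha ord0)]_(j < m.+1) (x j / alpha j).

Definition is_leontief {m} (u : bundle m.+1 -> R) : Prop :=
  exists alpha : bundle m.+1, (forall j, 0 < alpha j) /\ forall x, u x = leontief alpha x.

(* Cobb-Douglas utility prod_j x_j ^ alpha_j (powR, with 0 ^ 0 = 1) *)
Definition cobb_douglas {m} (alpha : bundle m.+1) (x : bundle m.+1) : R :=
  \prod_(j < m.+1) (x j `^ alpha j).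

Definition is_cobb_douglas {m} (u : bundle m.+1 -> R) : Prop :=
  exists alpha : bundle m.+1,
    [/\ (forall j, 0 <= alpha j <= 1), \sum_(j < m.+1) alpha j = 1 &
        forall x, u x = cobb_douglas alpha x].

(* Rendered as: E(u_i) is nonempty, and some x' in E(u') has
   u_i(x'_i) > 0 and u_i(x'_i) >= N * u_i(x_i) for every x in E(u_i). *)
Definition incentive_ratio_at_least
  (U : forall m : nat, (bundle m.+1 -> R) -> Prop) (N : R) : Prop :=
  exists (n m : nat) (u : 'I_n -> bundle m.+1 -> R) (e : 'I_n -> bundle m.+1)
         (i : 'I_n) (u' : bundle m.+1 -> R),
    [/\ (forall k, U m (u k)), (forall k, nonneg (e k)), U m u',
        (exists x, eq_alloc u e x) &
        exists x', [/\ eq_alloc (misreport u i u') e x',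
                       0 < u i (x' i) &
                       forall x, eq_alloc u e x -> N * u i (x i) <= u i (x' i)]].

End Economy.

(* Main.v *)
Require Import Defs.
From HB Require Import structures.
From mathcomp Require Import all_boot all_order all_algebra.
From mathcomp Require Import reals exp ring lra.
Set Implicit Arguments. Unset Strict Implicit. Unset Printing Implicit Defensive.
Import Order.TTheory GRing.Theory Num.Theory.
Local Open Scope ring_scope.

Lemma sum2 (R : realType) (F : 'I_2 -> R) : \sum_(j < 2) F j = F ord0 + F ord_max.
Proof. by rewrite big_ord_recr big_ord1 /=; congr (F _ + _); apply/val_inj. Qed.

Lemma prod2 (R : realType) (F : 'I_2 -> R) : \prod_(j < 2) F j = F ord0 * F ord_max.
Proof. by rewrite big_ord_recr big_ord1 /=; congr (F _ * _); apply/val_inj. Qed.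

Lemma dot2 (R : realType) (p x : bundle R 2) : dot p x = p ord0 * x ord0 + p ord_max * x ord_max.
Proof. rewrite /dot big_ord_recr big_ord1 /=; have -> : widen_ord (leqnSn 1) ord0 = ord0 :> 'I_2 by apply/val_inj. by []. Qed.

Lemma leon2 (R : realType) (a x : bundle R 2) :
  leontief a x = Num.min (x ord0 / a ord0) (x ord_max / a ord_max).
Proof.
rewrite /leontief big_ord_recl big_ord_recl big_ord0.
have -> : lift ord0 (ord0 : 'I_1) = ord_max :> 'I_2 by apply/val_inj.
by rewrite [Num.min (x ord_max / _) _]minC minA minxx.
Qed.

Lemma cd2 (R : realType) (a x : bundle R 2) :
  cobb_douglas a x = x ord0 `^ a ord0 * x ord_max `^ a ord_max.
Proof. by rewrite /cobb_douglas prod2. Qed.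

Lemma ln_le_sub1 (R : realType) (t : R) : 0 < t -> ln t <= t - 1.
Proof.
move=> t0; have := expR_ge1Dx (ln t); rewrite lnK ?posrE //; lra.
Qed.

Lemma ln_lt_sub1 (R : realType) (t : R) : 0 < t -> t != 1 -> ln t < t - 1.
Proof.
move=> t0 t1; have : ln t != 0 by rewrite ln_eq0.
move/expR_gt1Dx; rewrite lnK ?posrE //; lra.
Qed.

Lemma cd_opt (R : realType) (a p0 p1 W y0 y1 : R) :
  0 < a -> a < 1 -> 0 < p0 -> 0 < p1 -> 0 < W -> 0 <= y0 -> 0 <= y1 ->
  p0 * y0 + p1 * y1 <= W ->
  (y0 `^ a * y1 `^ (1 - a) <= (a * W / p0) `^ a * ((1 - a) * W / p1) `^ (1 - a)) /\
  ((a * W / p0) `^ a * ((1 - a) * W / p1) `^ (1 - a) <= y0 `^ a * y1 `^ (1 - a) ->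
     y1 = (1 - a) * W / p1).
Proof.
move=> a0 a1 p00 p10 W0 y00 y10 hb.
have a1' : 0 < 1 - a by rewrite subr_gt0.
set c0 := a * W / p0; set c1 := (1 - a) * W / p1.
have c00 : 0 < c0 by rewrite /c0 divr_gt0 ?mulr_gt0.
have c10 : 0 < c1 by rewrite /c1 divr_gt0 ?mulr_gt0.
have RHS0 : 0 < c0 `^ a * c1 `^ (1 - a) by rewrite mulr_gt0 ?powR_gt0.
case: (eqVneq y0 0) => [->|y0n].
  rewrite powR0 ?gt_eqF // mul0r; split; [exact: ltW | move=> h; exfalso; lra].
case: (eqVneq y1 0) => [->|y1n].
  rewrite (powR0 (lt0r_neq0 a1')) mulr0; split; [exact: ltW | move=> h; exfalso; lra].
have y0p : 0 < y0 by rewrite lt_neqAle eq_sym y0n.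
have y1p : 0 < y1 by rewrite lt_neqAle eq_sym y1n.
have key : a * (y0 / c0) + (1 - a) * (y1 / c1) <= 1.
  have -> : a * (y0 / c0) + (1 - a) * (y1 / c1) = (p0 * y0 + p1 * y1) / W.
    rewrite /c0 /c1; field.
    by rewrite !gt_eqF.
  by rewrite ler_pdivrMr // mul1r.
clearbody c0 c1.
have lnL : ln (y0 `^ a * y1 `^ (1 - a)) = a * ln y0 + (1 - a) * ln y1.
  by rewrite lnM ?posrE ?powR_gt0 // !ln_powR.
have lnR : ln (c0 `^ a * c1 `^ (1 - a)) = a * ln c0 + (1 - a) * ln c1.
  by rewrite lnM ?posrE ?powR_gt0 // !ln_powR.
have dif : a * ln y0 + (1 - a) * ln y1 - (a * ln c0 + (1 - a) * ln c1)
           = a * ln (y0 / c0) + (1 - a) * ln (y1 / c1).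
  rewrite !ln_div ?posrE //; ring.
have b0 := ler_wpM2l (ltW a0) (ln_le_sub1 (divr_gt0 y0p c00)).
have b1 := ler_wpM2l (ltW a1') (ln_le_sub1 (divr_gt0 y1p c10)).
split.
  rewrite -ler_ln ?posrE ?mulr_gt0 ?powR_gt0 // lnL lnR; lra.
rewrite -ler_ln ?posrE ?mulr_gt0 ?powR_gt0 // lnL lnR => h.
case: (eqVneq (y1 / c1) 1) => [e|ne].
  by rewrite -[y1](divfK (lt0r_neq0 c10)) e mul1r.
have b1' : (1 - a) * ln (y1 / c1) < (1 - a) * (y1 / c1 - 1) by rewrite ltr_pM2l // ln_lt_sub1 // divr_gt0.
exfalso; lra.
Qed.
Definition mk2 (T : Type) (a b : T) : 'I_2 -> T :=
  fun j => if nat_of_ord j == 0%N then a else b.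

Lemma mk20 (T : Type) (a b : T) : mk2 a b ord0 = a. Proof. by []. Qed.
Lemma mk21 (T : Type) (a b : T) : mk2 a b ord_max = b. Proof. by []. Qed.
Ltac s2 := rewrite ?mk20 ?mk21 ?mk20 ?mk21 /=.

Lemma I2_cases (j : 'I_2) : j = ord0 \/ j = ord_max.
Proof.
case: j => [[|[|k]] Hk]; [left|right|by []]; exact/val_inj.
Qed.

Lemma mk2_nonneg (R : realType) (a b : R) : 0 <= a -> 0 <= b -> nonneg (mk2 a b : bundle R 2).
Proof. by move=> ha hb j; case: (I2_cases j) => ->. Qed.

Lemma minle_l (R : realType) (z a b : R) : z <= Num.min a b -> z <= a.
Proof. by rewrite le_min => /andP[]. Qed.
Lemma minle_r (R : realType) (z a b : R) : z <= Num.min a b -> z <= b.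
Proof. by rewrite le_min => /andP[]. Qed.
Lemma minxx_le (R : realType) (a b : R) : Num.min a a <= b -> a <= b.
Proof. by rewrite minxx. Qed.

Lemma leon_part (R : realType) (N : R) : 0 < N ->
  incentive_ratio_at_least (fun m => @is_leontief R m) N.
Proof.
move=> N0.
exists 2%N, 1%N.
exists (mk2 (leontief (mk2 1 2)) (leontief (mk2 1 1))).
exists (mk2 (mk2 1 0) (mk2 0 1)).
exists ord0.
exists (leontief (mk2 1 1)).
split.
- move=> k; case: (I2_cases k) => ->; s2.
  + exists (mk2 1 2); split => // j; case: (I2_cases j) => -> //=.
  + exists (mk2 1 1); split => // j; case: (I2_cases j) => -> //=.
- move=> k; case: (I2_cases k) => ->; s2; exact: mk2_nonneg.
- exists (mk2 1 1); split => // j; case: (I2_cases j) => -> //=.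
- exists (mk2 (mk2 0 0) (mk2 1 1)); exists (mk2 0 1); split.
  + exact: mk2_nonneg.
  + move=> j; rewrite !sum2; case: (I2_cases j) => ->; s2; lra.
  + move=> k; case: (I2_cases k) => ->; s2; split.
    * exact: mk2_nonneg.
    * rewrite !dot2; s2; lra.
    * move=> y y0; rewrite !dot2 !leon2; s2 => hy.
      have y1 : y ord_max = 0 by have := y0 ord_max; lra.
      rewrite y1 !mul0r minxx; rewrite ge_min; apply/orP; right; lra.
    * exact: mk2_nonneg.
    * rewrite !dot2; s2; lra.
    * move=> y y0; rewrite !dot2 !leon2; s2 => hy.
      rewrite !divr1 minxx ge_min; apply/orP; right; lra.
- exists (mk2 (mk2 1 1) (mk2 0 0)); split.
  + exists (mk2 1 0); split.
    * exact: mk2_nonneg.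
    * move=> j; rewrite !sum2; case: (I2_cases j) => ->; s2; lra.
    * move=> k; case: (I2_cases k) => ->; s2; rewrite /misreport; s2; split.
      -- exact: mk2_nonneg.
      -- rewrite !dot2; s2; lra.
      -- move=> y y0; rewrite !dot2 !leon2; s2 => hy.
         rewrite !divr1 minxx ge_min; apply/orP; left; lra.
      -- exact: mk2_nonneg.
      -- rewrite !dot2; s2; lra.
      -- move=> y y0; rewrite !dot2 !leon2; s2 => hy.
         rewrite !mul0r !divr1 minxx ge_min; apply/orP; left; lra.
  + s2; rewrite leon2; s2; rewrite divr1 lt_min; apply/andP; split; lra.
  + move=> x [p [pnn clr dem]].
    s2; rewrite !leon2; s2; rewrite !divr1.
    have c0 := clr ord0; have c1 := clr ord_max.
    rewrite !sum2 in c0 c1; move: c0 c1; s2 => c0 c1.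
    have [nx0 b0 o0] := dem ord0; have [nx1 b1 o1] := dem ord_max.
    move: b0 b1 o0 o1; s2; rewrite !dot2; s2 => b0 b1 o0 o1.
    have := nx0 ord0; have := nx0 ord_max; have := nx1 ord0; have := nx1 ord_max.
    have q1n := pnn ord_max; have q0n := pnn ord0.
    have x00n := nx0 ord0; have x01n := nx0 ord_max.
    have x10n := nx1 ord0; have x11n := nx1 ord_max.
    rewrite (_ : Num.min 1 (1 / 2) = 1 / 2); last by apply: min_r; lra.
    suff hv : Num.min (x ord0 ord0) (x ord0 ord_max / 2) <= 0.
      have : N * Num.min (x ord0 ord0) (x ord0 ord_max / 2) <= 0 by rewrite pmulr_rle0.
      lra.
    case: (eqVneq (p ord_max) 0) => q1z.
    { exfalso.
      have := o0 (mk2 1 2) (mk2_nonneg ler01 (ler0n _ 2)).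
      rewrite dot2; s2; rewrite q1z => /(_ ltac:(lra)).
      rewrite !leon2; s2; rewrite !divr1 divff; last by rewrite pnatr_eq0.
      move=> /minle_r /minxx_le h; lra. }
    have q1p : 0 < p ord_max by rewrite lt0r q1z.
    case: (eqVneq (p ord0) 0) => q0z.
    { rewrite ge_min; apply/orP; right.
      have : p ord_max * x ord0 ord_max <= 0 by move: b0; rewrite q0z; lra.
      rewrite pmulr_rle0 // => h; lra. }
    exfalso.
    have q0p : 0 < p ord0 by rewrite lt0r q0z.
    have s1p : 0 < p ord0 + p ord_max by lra.
    have s2p : 0 < p ord0 + 2 * p ord_max by lra.
    set w := p ord_max / (p ord0 + p ord_max).
    have w0 : 0 <= w by rewrite /w divr_ge0 // ltW.
    have := o1 (mk2 w w) (mk2_nonneg w0 w0).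
    rewrite dot2; s2.
    have -> : p ord0 * w + p ord_max * w = p ord_max.
      by rewrite /w; field; rewrite lt0r_neq0.
    move=> /(_ ltac:(lra)).
    rewrite !leon2; s2 => /minle_r /minxx_le; rewrite !divr1 => hw.
    set z := p ord0 / (p ord0 + 2 * p ord_max).
    have z0 : 0 <= z by rewrite /z divr_ge0 // ltW.
    have z20 : 0 <= 2 * z by rewrite mulr_ge0.
    have := o0 (mk2 z (2 * z)) (mk2_nonneg z0 z20).
    rewrite dot2; s2.
    have -> : p ord0 * z + p ord_max * (2 * z) = p ord0.
      by rewrite /z; field; rewrite lt0r_neq0.
    move=> /(_ ltac:(lra)).
    rewrite !leon2; s2; rewrite !divr1.
    have -> : 2 * z / 2 = z by field.
    move=> /minle_r /minxx_le hz.
    move: hw hz; rewrite /w /z ler_pdivrMr // ler_pdivrMr // => hw hz.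
    nra.
Qed.

Lemma cd_part (R : realType) (N : R) : 0 < N ->
  incentive_ratio_at_least (fun m => @is_cobb_douglas R m) N.
Proof.
move=> N0.
set b : R := (N + 1)^-1.
have b0 : 0 < b by rewrite /b invr_gt0; lra.
have b1 : b < 1 by rewrite /b invf_lt1; lra.
have Nb : N * b <= 1.
  by rewrite /b ler_pdivrMr; lra.
have b1' : 0 < 1 - b by lra.
exists 2%N, 1%N.
exists (mk2 (cobb_douglas (mk2 0 1)) (cobb_douglas (mk2 b (1 - b)))).
exists (mk2 (mk2 1 0) (mk2 0 1)).
exists ord0.
exists (cobb_douglas (mk2 1 0)).
split.
- move=> k; case: (I2_cases k) => ->; s2.
  + exists (mk2 0 1); split => //.
    * move=> j; case: (I2_cases j) => ->; s2; lra.
    * rewrite sum2; s2; lra.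
  + exists (mk2 b (1 - b)); split => //.
    * move=> j; case: (I2_cases j) => ->; s2; apply/andP; split; lra.
    * rewrite sum2; s2; lra.
- move=> k; case: (I2_cases k) => ->; s2; exact: mk2_nonneg.
- exists (mk2 1 0); split => //.
  * move=> j; case: (I2_cases j) => ->; s2; lra.
  * rewrite sum2; s2; lra.
- exists (mk2 (mk2 0 b) (mk2 1 (1 - b))); exists (mk2 b 1); split.
  + apply: mk2_nonneg; lra.
  + move=> j; rewrite !sum2; case: (I2_cases j) => ->; s2; lra.
  + move=> k; case: (I2_cases k) => ->; s2; split.
    * apply: mk2_nonneg; lra.
    * rewrite !dot2; s2; lra.
    * move=> y y0; rewrite !dot2 !cd2; s2 => hy.
      have := y0 ord0; have := y0 ord_max => y1n y0n.
      rewrite !powRr0 powRr1 // powRr1; last lra.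
      have := mulr_ge0 (ltW b0) y0n; lra.
    * apply: mk2_nonneg; lra.
    * rewrite !dot2; s2; lra.
    * move=> y y0; rewrite !dot2 !cd2; s2 => hy.
      have := y0 ord0; have := y0 ord_max => y1n y0n.
      have [h _] := @cd_opt R b b 1 1 (y ord0) (y ord_max) b0 b1 b0 ltr01 ltr01 y0n y1n
        ltac:(lra).
      move: h.
      have -> : b * 1 / b = 1 by field; rewrite lt0r_neq0.
      by rewrite mulr1 divr1.
- exists (mk2 (mk2 1 1) (mk2 0 0)); split.
  + exists (mk2 1 0); split.
    * apply: mk2_nonneg; lra.
    * move=> j; rewrite !sum2; case: (I2_cases j) => ->; s2; lra.
    * move=> k; case: (I2_cases k) => ->; rewrite /misreport; s2; split.
      -- apply: mk2_nonneg; lra.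
      -- rewrite !dot2; s2; lra.
      -- move=> y y0; rewrite !dot2 !cd2; s2 => hy.
         have := y0 ord0; have := y0 ord_max => y1n y0n.
         rewrite !powRr0 !powRr1 //; lra.
      -- apply: mk2_nonneg; lra.
      -- rewrite !dot2; s2; lra.
      -- move=> y y0; rewrite !dot2 !cd2; s2 => hy.
         have := y0 ord0; have := y0 ord_max => y1n y0n.
         have -> : y ord0 = 0 by lra.
         rewrite powR0 ?mul0r //; exact: lt0r_neq0.
  + s2; rewrite cd2; s2; rewrite powRr0 powRr1 //; lra.
  + move=> x [p [pnn clr dem]].
    s2; rewrite !cd2; s2.
    have c0 := clr ord0; have c1 := clr ord_max.
    rewrite !sum2 in c0 c1; move: c0 c1; s2 => c0 c1.
    have [nx0 bb0 o0] := dem ord0; have [nx1 bb1 o1] := dem ord_max.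
    move: bb0 bb1 o0 o1; s2; rewrite !dot2; s2 => bb0 bb1 o0 o1.
    have q1n := pnn ord_max; have q0n := pnn ord0.
    have x00n := nx0 ord0; have x01n := nx0 ord_max.
    have x10n := nx1 ord0; have x11n := nx1 ord_max.
    rewrite !powRr0 !powRr1 //.
    suff hx : x ord0 ord_max <= b.
      have := ler_wpM2l (ltW N0) hx; lra.
    case: (eqVneq (p ord_max) 0) => q1z.
    { exfalso.
      have hy : nonneg (mk2 (x ord0 ord0) (x ord0 ord_max + 1) : bundle R 2).
        apply: mk2_nonneg; lra.
      have := o0 _ hy.
      rewrite dot2; s2; rewrite q1z => /(_ ltac:(move: bb0; rewrite q1z; lra)).
      rewrite !cd2; s2; rewrite !powRr0 !powRr1 //; lra. }
    have q1p : 0 < p ord_max by rewrite lt0r q1z.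
    case: (eqVneq (p ord0) 0) => q0z.
    { exfalso.
      have hy : nonneg (mk2 2 1 : bundle R 2) by apply: mk2_nonneg; lra.
      have := o1 _ hy.
      rewrite dot2; s2; rewrite q0z => /(_ ltac:(lra)).
      rewrite !cd2; s2.
      have e1 : forall r : R, 1 `^ r = 1 by move=> r; rewrite powR1.
      rewrite e1 mulr1.
      have h2 : 1 < 2 `^ b.
        rewrite -{1}(e1 b); apply: gt0_ltr_powR => //; rewrite ?nnegrE; lra.
      have h3 : x ord_max ord0 `^ b <= 1.
        rewrite -(e1 b); apply: ge0_ler_powR; rewrite ?nnegrE; lra.
      have h4 : x ord_max ord_max `^ (1 - b) <= 1.
        rewrite -[X in _ <= X](e1 (1 - b)); apply: (ge0_ler_powR (ltW b1')); rewrite ?nnegrE; lra.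
      have h5 := mulr_ile1 (powR_ge0 _ _) (powR_ge0 _ _) h3 h4.
      lra. }
    have q0p : 0 < p ord0 by rewrite lt0r q0z.
    have hx1 : p ord0 * x ord_max ord0 + p ord_max * x ord_max ord_max <= p ord_max.
      lra.
    have [_ u] := @cd_opt R b (p ord0) (p ord_max) (p ord_max) _ _ b0 b1 q0p q1p q1p x10n x11n hx1.
    have hc0 : 0 <= b * p ord_max / p ord0 by rewrite divr_ge0 ?mulr_ge0 //; lra.
    have hc1 : 0 <= (1 - b) * p ord_max / p ord_max by rewrite divr_ge0 ?mulr_ge0 //; lra.
    have := o1 _ (mk2_nonneg hc0 hc1).
    rewrite dot2; s2.
    have -> : p ord0 * (b * p ord_max / p ord0) + p ord_max * ((1 - b) * p ord_max / p ord_max)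
              = p ord_max by field; rewrite !lt0r_neq0.
    move=> /(_ ltac:(lra)).
    rewrite !cd2; s2 => /u.
    have -> : (1 - b) * p ord_max / p ord_max = 1 - b by field; rewrite lt0r_neq0.
    lra.
Qed.

Theorem proposition1 (R : realType) :
  (forall N : R, 0 < N -> incentive_ratio_at_least (fun m => @is_leontief R m) N) /\
  (forall N : R, 0 < N -> incentive_ratio_at_least (fun m => @is_cobb_douglas R m) N).
Proof. split; [exact: leon_part | exact: cd_part]. Qed.
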